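(* For every $i$ with $0\le i\le \rho(m)-1$, the sequence $x^{\alpha_i}$ satisfies $x^{\alpha_i}(k)=1$.
   Context: For $u\in\mathbb{R}$ let $\mathbf 1[u]=1$ if $u\ge 0$ and $\mathbf 1[u]=0$ if $u<0$. Let $m$ be a positive integer and let $\rho(m)$ denote the number of primes $p$ with $2m<p<3m$; assume $\rho(m)\ge 2$. List these primes as $p_0>p_1>\dots>p_{\rho(m)-1}$ and put $\alpha_i=3m-p_i$. Let $k=(6m-1)\rho(m)$, $\mu_i=\lfloor k/p_i\rfloor$, $\beta_i=k-p_i\mu_i$. Define weights $\bar a_j$, $1\le j\le k$: if $\rho(m)$ is even, $\bar a_j=2$ if $j=\ell p_i$ for some $i$ and some $\ell$ with $1\le \ell\le 3\rho(m)/2$, $\bar a_j=-2$ if $j=\ell p_i$ with $3\rho(m)/2<\ell\le 2\rho(m)$, and $\bar a_j=0$ otherwise; if $\rho(m)$ is odd, $\bar a_j=2$ if $j=\ell p_i$ with $1\le\ell\le (3\rho(m)-1)/2$, $\bar a_j=-2$ if $j=\ell p_i$ with $(3\rho(m)+1)/2\le \ell\le 2\rho(m)-2$, $\bar a_j=-1$ if $j=\ell p_i$ with $\ell\in\{2\rho(m)-1,2\rho(m)\}$, and $\bar a_j=0$ otherwise (well defined since the sets $\{\ell p_i:1\le\ell\le2\rho(m)\}$ are pairwise disjoint). Let $\bar\theta=2\rho(m)$. For each $i$ define $x^{\alpha_i}(t)$ for $0\le t\le k-1$ by $x^{\alpha_i}(t)=1$ if $t=\beta_i+\ell p_i$ for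 some $0\le \ell\le\mu_i-1$ and $x^{\alpha_i}(t)=0$ otherwise, and for $t\ge k$ by $x^{\alpha_i}(t)=\mathbf 1\big[\sum_{j=1}^k \bar a_j x^{\alpha_i}(t-j)-\bar\theta\big]$. *)

(* Defs.v *)
From mathcomp Require Import all_boot all_order all_algebra.
Set Implicit Arguments. Unset Strict Implicit. Unset Printing Implicit Defensive.
Import GRing.Theory Num.Theory.

(* primes p with 2m < p < 3m, listed in decreasing order p_0 > p_1 > ... *)
Definition primes_dec (m : nat) : seq nat :=
  rev [seq p <- iota (2 * m).+1 (m.-1) | prime p].

Definition rho (m : nat) : nat := size (primes_dec m).

Definition pr (m i : nat) : nat := nth 0 (primes_dec m) i.

Definition alpha (m i : nat) : nat := 3 * m - pr m i.

Definition kk (m : nat) : nat := (6 * m - 1) * rho m.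

Definition mu (m i : nat) : nat := kk m %/ pr m i.

Definition beta (m i : nat) : nat := kk m - pr m i * mu m i.

(* weight attached to j = l * p_i, 1 <= l <= 2 rho *)
Definition wt (r l : nat) : int :=
  if ~~ odd r then
    (if l <= (3 * r)./2 then Posz 2 else Negz 1)
  else
    (if l <= (3 * r - 1)./2 then Posz 2
     else if l <= 2 * r - 2 then Negz 1 else Negz 0).

Definition abar (m j : nat) : int :=
  let ps := primes_dec m in
  let P := fun p => (p %| j) && (1 <= j %/ p <= 2 * rho m) in
  let i := find P ps in
  if i < size ps then wt (rho m) (j %/ nth 0 ps i) else Posz 0.

Definition theta (m : nat) : int := Posz (2 * rho m).

(* initial segment of x^{alpha_i} on 0 <= t <= k-1 *)
Definition xinit (m i t : nat) : nat :=
  if [exists l : 'I_(mu m i), t == beta m i + l * pr m i] then 1 else 0.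

(* value at time t given the list prev = [x(0); ...; x(t-1)] *)
Definition xstep (m i t : nat) (prev : seq nat) : nat :=
  if t < kk m then xinit m i t
  else if (theta m <= \sum_(1 <= j < (kk m).+1) abar m j * Posz (nth 0 prev (t - j)))%R
       then 1 else 0.

Fixpoint xlist (m i n : nat) : seq nat :=
  match n with
  | 0 => [::]
  | n'.+1 => let prev := xlist m i n' in rcons prev (xstep m i n' prev)
  end.

Definition xseq (m i t : nat) : nat := nth 0 (xlist m i t.+1) t.

(* Main.v *)
Require Import Defs.
From mathcomp Require Import all_boot all_order all_algebra.
From mathcomp Require Import zify.
Import GRing.Theory Num.Theory.

Lemma size_xlist m i n : size (xlist m i n) = n.
Proof. by elim: n => //= n IH; rewrite size_rcons IH. Qed.

Lemma nth_xlist m i n t : t < n -> nth 0 (xlist m i n) t = xstep m i t (xlist m i t).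
Proof.
elim: n => // n IH lt; rewrite /= nth_rcons size_xlist.
case: ltnP => h; first by apply: IH.
have -> : t = n by lia.
by rewrite eqxx.
Qed.

Lemma mem_ps m q : q \in primes_dec m -> prime q /\ 2 * m < q < 3 * m.
Proof.
rewrite /primes_dec mem_rev mem_filter mem_iota => /andP [pq hq].
split => //; lia.
Qed.

Lemma rho_le m : rho m <= m.-1.
Proof.
by rewrite /rho /primes_dec size_rev size_filter (leq_trans (count_size _ _)) // size_iota.
Qed.

Lemma uniq_ps m : uniq (primes_dec m).
Proof. by rewrite /primes_dec rev_uniq filter_uniq // iota_uniq. Qed.

Lemma uniqP m p q j : p \in primes_dec m -> q \in primes_dec m ->
  p %| j -> q %| j -> 0 < j %/ q <= 2 * rho m -> q = p.
Proof.
move=> pin qin pj qj hq.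
have [pp hp] := mem_ps m p pin; have [pq hq'] := mem_ps m q qin.
have hr := rho_le m.
case: (eqVneq q p) => // nqp.
have cop : coprime p q by rewrite prime_coprime // dvdn_prime2 // eq_sym.
have : p %| q * (j %/ q) by rewrite mulnC divnK.
rewrite Gauss_dvdr // => pd.
have := dvdn_leq _ pd; lia.
Qed.

Lemma abarE m p j : 0 < m -> p \in primes_dec m -> p %| j ->
  abar m j = if 0 < j %/ p <= 2 * rho m then wt (rho m) (j %/ p) else 0.
Proof.
move=> hm pin pj; rewrite /abar /=.
pose P := fun q => (q %| j) && (1 <= j %/ q <= 2 * rho m).
rewrite -/P.
case: (boolP (0 < j %/ p <= 2 * rho m)) => hjp.
  have hP : P p by rewrite /P pj /=; exact: hjp.
  have hh : has P (primes_dec m) by apply/hasP; exists p.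
  have hf : find P (primes_dec m) < size (primes_dec m) by rewrite -has_find.
  rewrite hf.
  have := nth_find 0 hh; have := mem_nth 0 hf.
  set q := nth 0 _ _ => qin /andP [qj hq].
  by rewrite (uniqP m p q j pin qin pj qj hq).
case: ifP => // hf.
have hh : has P (primes_dec m) by rewrite has_find.
have := nth_find 0 hh; have := mem_nth 0 hf.
set q := nth 0 _ _ => qin /andP [qj hq].
by move: hjp; rewrite -(uniqP m p q j pin qin pj qj hq); rewrite hq.
Qed.

Lemma wt_sum r : 2 <= r -> (\sum_(1 <= l < (2 * r).+1) wt r l = Posz (2 * r))%R.
Proof.
move=> hr.
case: (boolP (odd r)) => hodd.
  rewrite (big_cat_nat _ (n := ((3 * r - 1)./2).+1)) /=; [|lia|lia].
  rewrite (eq_big_nat _ _ (F2 := fun _ => Posz 2)); last by move=> l hl; rewrite /wt hodd /= ifT //; lia.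
  rewrite [X in (_ + X)%R](big_cat_nat _ (n := (2 * r - 2).+1)) /=; [|lia|lia].
  rewrite [X in (_ + (X + _))%R](eq_big_nat _ _ (F2 := fun _ => Negz 1)); last by move=> l hl; rewrite /wt hodd /= ifF ?ifT //; lia.
  rewrite [X in (_ + (_ + X))%R](eq_big_nat _ _ (F2 := fun _ => Negz 0)); last by move=> l hl; rewrite /wt hodd /= ifF ?ifF //; lia.
  rewrite !sumr_const_nat; lia.
rewrite (big_cat_nat _ (n := ((3 * r)./2).+1)) /=; [|lia|lia].
rewrite (eq_big_nat _ _ (F2 := fun _ => Posz 2)); last by move=> l hl; rewrite /wt hodd /= ifT //; lia.
rewrite [X in (_ + X)%R](eq_big_nat _ _ (F2 := fun _ => Negz 1)); last by move=> l hl; rewrite /wt hodd /= ifF //; lia.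
rewrite !sumr_const_nat; lia.
Qed.

Theorem lemma5 (m : nat) (hm : 0 < m) (hrho : 2 <= rho m) :
  forall i, i < rho m -> xseq m i (kk m) = 1.
Proof.
move=> i hi.
rewrite /xseq nth_xlist // /xstep ltnn.
set k := kk m; set r := rho m; set p := pr m i.
have pin : p \in primes_dec m by apply: mem_nth.
have [pp hp] := mem_ps m p pin.
have p0 : 0 < p by apply: prime_gt0.
have hr := rho_le m.
pose F j : int := if (p %| j) && (0 < j %/ p <= 2 * r) then wt r (j %/ p) else 0%R.
have F0 : forall j, ~~ (p %| j) -> F j = 0%R by move=> j /negbTE; rewrite /F => ->.
have F00 : F 0 = 0%R by rewrite /F div0n andbF.
have Fbig : forall j, 2 * r * p < j -> F j = 0%R.
  move=> j hj; rewrite /F; case: (boolP (p %| j)) => //= pj.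
  rewrite ifF //; apply/negP => /andP [_ h]; move: (leq_mul h (leqnn p)); rewrite divnK //; lia.
have kdef : k = mu m i * p + beta m i.
  rewrite /beta /mu -/k -/p; have := divn_eq k p; lia.
have S1 : (\sum_(1 <= j < k.+1) abar m j * Posz (nth 0 (xlist m i k) (k - j))
           = \sum_(0 <= j < k.+1) F j)%R.
  rewrite [RHS]big_ltn // F00 add0r.
  apply: eq_big_nat => j /andP [j1 jk].
  rewrite nth_xlist; last by lia.
  rewrite /xstep ifT; last by lia.
  rewrite /xinit -/p.
  case: (boolP (p %| j)) => pj.
    rewrite ifT; last first.
      apply/existsP.
      have hc : j %/ p <= mu m i by rewrite /mu -/k -/p leq_divRL // divnK //; lia.
      have hc1 : 0 < j %/ p by rewrite divn_gt0 //; apply: dvdn_leq.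
      have hl : mu m i - j %/ p < mu m i by lia.
      exists (Ordinal hl) => /=; apply/eqP.
      rewrite mulnBl divnK //; move: (leq_mul hc (leqnn p)); rewrite divnK // => h2.
      lia.
    by rewrite mulr1 (abarE m p j hm pin pj) /F pj.
  rewrite ifF ?mulr0 ?F0 //.
  apply/negbTE/negP => /existsP [[l hl] /= /eqP e].
  move/negP: pj; apply; apply/dvdnP; exists (mu m i - l).
  rewrite mulnBl; move: (leq_mul (ltnW hl) (leqnn p)) => h2; lia.
have cut : forall N, 2 * r * p < N -> (\sum_(0 <= j < N) F j = \sum_(0 <= j < (2 * r * p).+1) F j)%R.
  move=> N hN; rewrite (big_cat_nat _ (n := (2 * r * p).+1)) //=.
  rewrite [X in (_ + X)%R]big1_seq ?addr0 // => j /andP [_].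
  by rewrite mem_index_iota => /andP [hj _]; apply: Fbig.
have blocks : forall q, (\sum_(0 <= j < q * p) F j = \sum_(0 <= l < q) F (l * p))%R.
  elim=> [|q IH]; first by rewrite mul0n !big_geq.
  rewrite big_nat_recr //= -IH (big_cat_nat _ (n := q * p)) //=; last by rewrite leq_mul2r leqnSn orbT.
  congr (_ + _)%R.
  rewrite mulSn addnC big_ltn; last by lia.
  rewrite big1_seq ?addr0 // => j /andP [_].
  rewrite mem_index_iota => /andP [h1 h2]; apply: F0.
  rewrite -(subnK (ltnW h1)) dvdn_addl ?dvdn_mull // gtnNdvd //; lia.
rewrite S1 cut; last first.
  have : p <= 3 * m - 1 by lia.
  move=> hp3; rewrite /k /kk -/r.
  have := leq_mul (leqnn (2 * r)) hp3; lia.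
rewrite -(cut ((2 * r).+1 * p)); last by rewrite mulSn; lia.
rewrite blocks big_ltn // ?mul0n F00 add0r.
rewrite (eq_big_nat _ _ (F2 := fun l => wt r l)); last first.
  move=> l hl; rewrite /F mulnK // dvdn_mull //= ifT //; lia.
by rewrite wt_sum // Order.POrderTheory.lexx.
Qed.
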